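(* Let $k\geq3$, $A=\{0,1,\dots,k-1\}$, $N=k-1$ and let $T\colon A^{N^2}\to A$ be given by $T(x_{1,1},\dots,x_{1,N},\dots,x_{N,1},\dots,x_{N,N})=1$ if $x_{i,j}=i$ for all $i,j\in\{1,\dots,N\}$ or $x_{i,j}=j$ for all $i,j\in\{1,\dots,N\}$, and $0$ otherwise. Then for all $1\leq n<k-1$, \[\langle\{T\}\rangle^{(n)}=J_n(A)\cup\{c^n_0\},\] where $c^n_0$ is the $n$-ary constant zero function.
   Context: $\langle\{T\}\rangle$ denotes the clone generated by $T$ (all term operations of positive arity of the algebra $(A;T)$, including projections), and $\langle\{T\}\rangle^{(n)}$ its $n$-ary members. $J_n(A)$ is the set of $n$-ary projections $(x_1,\dots,x_n)\mapsto x_i$, $1\leq i\leq n$. *)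

(* Defs.v *)
From mathcomp Require Import all_boot.
Set Implicit Arguments. Unset Strict Implicit. Unset Printing Implicit Defensive.

(* in_clone T n f : f is an n-ary member of the clone <{T}> generated by the
   single operation T : (I -> A) -> A (arity #|I|), i.e. f is an n-ary term
   operation of the algebra (A; T): the smallest set of n-ary operations
   containing the projections and closed under composition with T. *)
Inductive in_clone (A : Type) (I : finType) (T : (I -> A) -> A) (n : nat)
  : (('I_n -> A) -> A) -> Prop :=
| clone_proj (i : 'I_n) : in_clone T (fun x => x i)
| clone_comp (g : I -> (('I_n -> A) -> A)) :
    (forall j, in_clone T (g j)) ->
    in_clone T (fun x => T (fun j => g j x)).

Definition is_projection (A : Type) (n : nat) (f : ('I_n -> A) -> A) : Prop :=
  exists i : 'I_n, f = (fun x => x i).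

(* Carrier A = {0,1,...,k-1}, realised as 'I_(k.-1).+1 (which has k elements
   when k >= 1); N = k - 1. *)
Definition carrier (k : nat) : finType := 'I_k.-1.+1.

(* The operation T : A^(N^2) -> A; variables x_{i,j}, i,j in {1..N}, are
   indexed by pairs (i', j') in 'I_N * 'I_N with i = i'+1, j = j'+1. *)
Definition Top (k : nat) (x : 'I_k.-1 * 'I_k.-1 -> carrier k) : carrier k :=
  if [forall ij, val (x ij) == ij.1.+1] || [forall ij, val (x ij) == ij.2.+1]
  then inord 1 else ord0.

Definition const0 (k n : nat) : ('I_n -> carrier k) -> carrier k :=
  fun _ => ord0.

(* Main.v *)
Require Import Defs.
From mathcomp Require Import all_boot.
From mathcomp Require Import zify.
From Stdlib Require Import FunctionalExtensionality.

Theorem lemma3p1 (k n : nat) (hk : 3 <= k) (hn1 : 1 <= n) (hn2 : n < k - 1) :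
  forall f : ('I_n -> carrier k) -> carrier k,
    in_clone (@Top k) f <-> (is_projection f \/ f = @const0 k n).
Proof.
have h0 : 0 < k.-1 by lia.
have h1 : 1 < k.-1 by lia.
pose j0 : 'I_k.-1 := Ordinal h0.
pose j1 : 'I_k.-1 := Ordinal h1.
move=> f; split.
- elim => [i | g _ IH].
  + by left; exists i.
  + right; apply: functional_extensionality => x.
    have key : forall c : 'I_k.-1 -> 'I_k.-1 * 'I_k.-1,
        (forall i, val (g (c i) x) = i.+1) -> False.
      move=> c Hc.
      have sub : {subset iota 1 k.-1 <= map (fun p => val (x p)) (enum 'I_n)}.
        move=> m; rewrite mem_iota => /andP[m1 mlt].
        have hi : m.-1 < k.-1 by lia.
        have := Hc (Ordinal hi).
        case: (IH (c (Ordinal hi))) => [[p ->] | ->] /= E.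
          apply/mapP; exists p; first by rewrite mem_enum.
          by rewrite E; lia.
        by move: E; rewrite /const0 /=; lia.
      have := uniq_leq_size (iota_uniq 1 k.-1) sub.
      rewrite size_map size_enum_ord size_iota; lia.
    rewrite /Top /const0; case: ifP => // /orP [ /forallP H | /forallP H]; exfalso.
    * by apply: (key (fun i => (i, j0))) => i; apply/eqP; exact: H.
    * by apply: (key (fun i => (j0, i))) => i; apply/eqP; exact: H.
- case => [[i ->] | ->]; first by constructor.
  pose i0 : 'I_n := Ordinal hn1.
  suff -> : const0 (n:=n) (k:=k) =
     (fun x => Top (fun j => (fun _ => fun x : 'I_n -> carrier k => x i0) j x)).
    by apply: clone_comp => j; apply: clone_proj.
  apply: functional_extensionality => x.
  rewrite /Top /const0; case: ifP => // /orP [ /forallP H | /forallP H].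
  + have E1 := H (j0, j0); have E2 := H (j1, j1).
    by move: E1 E2 => /= /eqP -> /eqP.
  + have E1 := H (j0, j0); have E2 := H (j1, j1).
    by move: E1 E2 => /= /eqP -> /eqP.
Qed.
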